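(* Let $(G,k)$ be an instance of \textsc{Bicolored $P_3$ Deletion} and let $e_1,e_2,e_3$ be three distinct edges of $G$ such that $e_1$ forms a bicolored $P_3$ with $e_2$ and $e_1$ forms a bicolored $P_3$ with $e_3$. Then $(G,k)$ is a yes-instance if and only if $(G-e_1,k-1)$ is a yes-instance or $(G-\{e_2,e_3\},k-2)$ is a yes-instance.
   Context: A two-colored graph $G=(V,E_r,E_b)$ is a finite simple undirected graph whose edge set $E=E_r\uplus E_b$ is partitioned into red and blue edges. A bicolored $P_3$ is an induced subgraph on three vertices $u,v,w$ with edges $\{u,v\},\{v,w\}$ of different colors and $\{u,w\}\notin E$; these two edges are said to form a bicolored $P_3$. \textsc{Bicolored $P_3$ Deletion}: given $G$ and an integer $k$, decide whether some $S\subseteq E$ with $|S|\le k$ makes $G-S$ free of induced bicolored $P_3$s (no-instance if $k<0$). *)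

(* Defs.v *)
From mathcomp Require Import all_boot all_order all_algebra.
Set Implicit Arguments. Unset Strict Implicit. Unset Printing Implicit Defensive.
Import GRing.Theory Num.Theory.

Definition two_colored (T : finType) (Er Eb : {set {set T}}) : Prop :=
  (forall e, e \in Er :|: Eb -> #|e| = 2) /\ [disjoint Er & Eb].

Definition edges (T : finType) (Er Eb : {set {set T}}) := Er :|: Eb.

Definition forms_bP3 (T : finType) (Er Eb : {set {set T}}) (e f : {set T}) : Prop :=
  exists u v w : T,
    [/\ [&& u != v, v != w & u != w],
        e = [set u; v], f = [set v; w]
      & ((e \in Er /\ f \in Eb) \/ (e \in Eb /\ f \in Er)) /\
          [set u; w] \notin edges Er Eb].

Definition bP3_free (T : finType) (Er Eb : {set {set T}}) : Prop :=
  forall e f, ~ forms_bP3 Er Eb e f.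


Definition yes_instance (T : finType) (Er Eb : {set {set T}}) (k : int) : Prop :=
  (0 <= k)%R /\
  exists S : {set {set T}}, [/\ S \subset edges Er Eb, (#|S|%:Z <= k)%R
                               & bP3_free (Er :\: S) (Eb :\: S)].

(* Main.v *)
Require Import Defs.
From mathcomp Require Import all_boot all_order all_algebra.
From mathcomp Require Import zify.
Import GRing.Theory Num.Theory.
Set Implicit Arguments. Unset Strict Implicit.

Lemma bP3_keep (T : finType) (Er Eb S : {set {set T}}) e f :
  forms_bP3 Er Eb e f -> e \notin S -> f \notin S ->
  forms_bP3 (Er :\: S) (Eb :\: S) e f.
Proof.
move=> [u [v [w [H1 H2 H3 [H4 H5]]]]] eS fS.
exists u, v, w; split => //; split.
  by rewrite !inE eS fS; case: H4 => [[-> ->]|[-> ->]]; [left|right].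
move: H5; rewrite /edges !inE; apply: contra.
by case/orP => /andP [_ ->]; rewrite ?orbT.
Qed.

Lemma remove_eq (T : finType) (Er A S : {set {set T}}) :
  A \subset S -> Er :\: A :\: (S :\: A) = Er :\: S.
Proof.
move=> AS; apply/setP => x; rewrite !inE.
case xA: (x \in A); case xS: (x \in S) => //=; rewrite ?andbF //.
by rewrite (subsetP AS) in xS.
Qed.

Lemma remove_eq2 (T : finType) (Er A S : {set {set T}}) :
  Er :\: A :\: S = Er :\: (A :|: S).
Proof. by rewrite setDDl. Qed.

Lemma ar0 (n m : nat) (k : int) : n = 1 + m -> (n%:Z <= k)%R -> (0 <= k - 1)%R.
Proof. lia. Qed.
Lemma ar1 (n m : nat) (k : int) : n = 1 + m -> (n%:Z <= k)%R -> (m%:Z <= k - 1)%R.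
Proof. lia. Qed.
Lemma ar2 (n m p : nat) (k : int) : n = 1 + m -> m = 1 + p -> (n%:Z <= k)%R -> (0 <= k - 2)%R.
Proof. lia. Qed.
Lemma ar3 (n m p : nat) (k : int) : n = 1 + m -> m = 1 + p -> (n%:Z <= k)%R -> (p%:Z <= k - 2)%R.
Proof. lia. Qed.
Lemma arB0 (a : nat) (k : int) : (0 <= k - a%:Z)%R -> (0 <= k)%R.
Proof. lia. Qed.
Lemma arB (n a m : nat) (k : int) : n <= a + m -> (m%:Z <= k - a%:Z)%R -> (n%:Z <= k)%R.
Proof. lia. Qed.

Theorem lemma5 (T : finType) (Er Eb : {set {set T}}) (k : int)
  (e1 e2 e3 : {set T}) :
  two_colored Er Eb ->
  e1 \in edges Er Eb -> e2 \in edges Er Eb -> e3 \in edges Er Eb ->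
  e1 != e2 -> e1 != e3 -> e2 != e3 ->
  forms_bP3 Er Eb e1 e2 -> forms_bP3 Er Eb e1 e3 ->
  (yes_instance Er Eb k <->
     yes_instance (Er :\ e1) (Eb :\ e1) (k - 1)%R \/
     yes_instance (Er :\: [set e2; e3]) (Eb :\: [set e2; e3]) (k - 2)%R).
Proof.
move=> _ E1 E2 E3 n12 n13 n23 P12 P13; split.
- move=> [k0 [S [SE Sk Sf]]].
  have cov : forall f, forms_bP3 Er Eb e1 f -> (e1 \in S) || (f \in S).
    move=> f P; apply: contraT => /norP [a b]; case: (Sf _ _ (bP3_keep P a b)).
  case e1S: (e1 \in S).
    left; have c := cardsD1 e1 S; rewrite e1S /= in c.
    split; first exact: ar0 c Sk.
    exists (S :\ e1); split.
    + apply/subsetP => x; rewrite /edges !inE => /andP [-> xS].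
      by move: (subsetP SE x xS); rewrite /edges inE.
    + exact: ar1 c Sk.
    + by rewrite !remove_eq ?sub1set.
  right.
  have e2S : e2 \in S by move: (cov _ P12); rewrite e1S.
  have e3S : e3 \in S by move: (cov _ P13); rewrite e1S.
  have c1 := cardsD1 e2 S; rewrite e2S /= in c1.
  have c2 := cardsD1 e3 (S :\ e2); rewrite !inE e3S eq_sym n23 /= in c2.
  have eq : S :\: [set e2; e3] = S :\ e2 :\ e3 by rewrite setDDl.
  split; first exact: ar2 c1 c2 Sk.
  exists (S :\: [set e2; e3]); split.
  + apply/subsetP => x; rewrite /edges !inE => /andP [-> xS].
    by move: (subsetP SE x xS); rewrite /edges inE.
  + rewrite eq; exact: ar3 c1 c2 Sk.
  + have sub : [set e2; e3] \subset S.
      by apply/subsetP => x; rewrite !inE => /orP [] /eqP ->.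
    by rewrite !remove_eq.
- case=> [[k0 [S [SE Sk Sf]]]|[k0 [S [SE Sk Sf]]]]; split.
  + exact: arB0 k0.
  + exists ([set e1] :|: S); split.
    * apply/subsetP => x; rewrite !inE => /orP [/eqP ->|xS]; first by move: E1; rewrite /edges inE.
      by move: (subsetP SE x xS); rewrite /edges !inE => /orP [] /andP [_ ->]; rewrite ?orbT.
    * apply: (arB _ Sk); rewrite -(cards1 e1); exact: leq_card_setU.
    * by rewrite -!remove_eq2.
  + exact: arB0 k0.
  + exists ([set e2; e3] :|: S); split.
    * apply/subsetP => x; rewrite !inE => /orP [/orP [] /eqP ->|xS]; [by move: E2; rewrite /edges inE|by move: E3; rewrite /edges inE|].
      by move: (subsetP SE x xS); rewrite /edges !inE => /orP [] /andP [_ ->]; rewrite ?orbT.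
    * apply: (arB (a := 2) _ Sk); have h := cards2 e2 e3; rewrite n23 in h; rewrite -{1}h; exact: leq_card_setU.
    * by move: Sf; rewrite !setDDl.
Qed.
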